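(* Let $\chi$ be an indecomposable character on $S(2^\infty)$ with GNS triple $(\pi,\mathcal{H},\xi)$. Let $A\subset X$ be nice and $s\in S(2^\infty)$ with $A\subset Fix(s)$. Then $\pi(s)P^A=P^A$.
   Context: Let $X=\{0,1\}^{\mathbb{N}}$; $X_n=\{0,1\}^n$; $S(2^n)$ the group of all bijections of $X_n$, acting on $X$ by $s((x,a))=(s(x),a)$; $S(2^\infty)=\bigcup_n S(2^n)$; $Fix(s)=\{x\in X:s(x)=x\}$. A character on a group $G$ is a function $\chi$ with $\chi(g_1g_2)=\chi(g_2g_1)$, $(\chi(g_ig_j^{-1}))_{i,j}$ positive semidefinite for all finite families, and $\chi(e)=1$; indecomposable means not a nontrivial convex combination of two distinct characters. GNS triple: $\pi$ a unitary representation on $\mathcal{H}$, $\xi$ a unit cyclic vector, $\chi(g)=(\pi(g)\xi,\xi)$. A set $A\subset X$ is nice if $A=C\times X$ for some $k$ and $C\subset X_k$ (sequences whose first $k$ coordinates lie in $C$). For such $A$ and $m>k$, $s^A_m$ fixes $A$ pointwise and flips the $m$-th coordinate of points outside $A$; $P^A$ is the weak operator limit of $\pi(s^A_m)$ as $m\to\infty$. *)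

(* Defs.v *)
From HB Require Import structures.
From mathcomp Require Import all_boot all_order all_algebra all_fingroup.
From mathcomp Require Import reals.
From mathcomp Require Import complex.
Set Implicit Arguments. Unset Strict Implicit. Unset Printing Implicit Defensive.
Import Order.TTheory GRing.Theory Num.Theory.
Local Open Scope ring_scope.

Definition X := nat -> bool.

Definition pre (n : nat) (x : X) : n.-tuple bool := [tuple x (nat_of_ord i) | i < n].

(* action of s in S(2^n) on X: s((y,a)) = (s(y), a) *)
Definition act (n : nat) (s : {perm n.-tuple bool}) : X -> X :=
  fun x i => if (i < n)%N then nth false (s (pre n x)) i else x i.

(* membership in S(2^oo) = union of the S(2^n), viewed as maps X -> X;
   group product is composition, identity is id *)
Definition inS (f : X -> X) : Prop :=
  exists n (s : {perm n.-tuple bool}), f = act s.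

Section Defs.
Variable R : realType.

Definition is_character (chi : (X -> X) -> R[i]) : Prop :=
  [/\ (forall f g, inS f -> inS g -> chi (f \o g) = chi (g \o f)),
      (forall (K : nat) (n : 'I_K -> nat) (s : forall i, {perm (n i).-tuple bool})
              (c : 'I_K -> R[i]),
          0 <= \sum_(i < K) \sum_(j < K)
                 c i * (c j)^* * chi (act (s i) \o act (s j)^-1))
    & chi id = 1].

Definition eqS (chi1 chi2 : (X -> X) -> R[i]) : Prop :=
  forall f, inS f -> chi1 f = chi2 f.

Definition indecomposable (chi : (X -> X) -> R[i]) : Prop :=
  ~ exists (chi1 chi2 : (X -> X) -> R[i]) (t : R[i]),
      [/\ 0 < t < 1, is_character chi1, is_character chi2, ~ eqS chi1 chi2
        & eqS chi (fun g => t * chi1 g + (1 - t) * chi2 g)].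

Section Hilbert.
Variable V : lmodType R[i].
Variable ip : V -> V -> R[i].

Definition hnorm (x : V) : R[i] := sqrtC (ip x x).

Definition is_inner_product : Prop :=
  [/\ (forall a x y z, ip (a *: x + y) z = a * ip x z + ip y z),
      (forall x y, ip y x = (ip x y)^*),
      (forall x, 0 <= ip x x)
    & (forall x, ip x x = 0 -> x = 0)].

Definition is_complete : Prop :=
  forall u : nat -> V,
    (forall e : R[i], 0 < e -> exists N, forall m n, (N <= m)%N -> (N <= n)%N ->
        hnorm (u m - u n) < e) ->
    exists l, forall e : R[i], 0 < e -> exists N, forall n, (N <= n)%N ->
        hnorm (u n - l) < e.

Definition is_hilbert : Prop := is_inner_product /\ is_complete.

Definition unitary_rep (pi : (X -> X) -> V -> V) : Prop :=
  [/\ (forall g, inS g -> forall (a : R[i]) x y, pi g (a *: x + y) = a *: pi g x + pi g y),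
      (forall g, inS g -> forall x y, ip (pi g x) (pi g y) = ip x y),
      (forall g, inS g -> forall y, exists x, pi g x = y),
      (forall g h, inS g -> inS h -> pi (g \o h) =1 pi g \o pi h)
    & pi id =1 id].

Definition cyclic_vector (pi : (X -> X) -> V -> V) (xi : V) : Prop :=
  forall (eta : V) (e : R[i]), 0 < e ->
    exists (K : nat) (g : 'I_K -> X -> X) (c : 'I_K -> R[i]),
      (forall i, inS (g i)) /\ hnorm (eta - \sum_(i < K) c i *: pi (g i) xi) < e.

Definition GNS_triple (chi : (X -> X) -> R[i]) (pi : (X -> X) -> V -> V) (xi : V) : Prop :=
  [/\ unitary_rep pi, ip xi xi = 1, cyclic_vector pi xi
    & forall g, inS g -> chi g = ip (pi g xi) xi].

Definition cvgC (u : nat -> R[i]) (l : R[i]) : Prop :=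
  forall e : R[i], 0 < e -> exists N, forall m, (N <= m)%N -> `|u m - l| < e.

Definition wot_limit (T : nat -> V -> V) (P : V -> V) : Prop :=
  forall eta zeta, cvgC (fun m => ip (T m eta) zeta) (ip (P eta) zeta).

End Hilbert.
End Defs.

(* The nice set A = C x X (C a subset of X_k) and s^A_m: fixes A pointwise and
   flips the m-th coordinate (index m.-1, coordinates numbered from 1) outside A.
   Only relevant for m > k. *)
Definition flip (j : nat) (x : X) : X := fun i => if i == j then ~~ x i else x i.

Definition sA (k : nat) (C : {set k.-tuple bool}) (m : nat) : X -> X :=
  fun x => if pre k x \in C then x else flip m.-1 x.

(* Main.v *)
Require Import Defs.
From HB Require Import structures.
From mathcomp Require Import all_boot all_order all_algebra all_fingroup.
From mathcomp Require Import reals.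
From mathcomp Require Import complex.
From mathcomp Require Import ring.
From Stdlib Require Import FunctionalExtensionality.
Import Order.TTheory GRing.Theory Num.Theory.
Set Implicit Arguments. Unset Strict Implicit. Unset Printing Implicit Defensive.
Local Notation act := Defs.act.
Local Notation flip := Defs.flip.

Definition loc (L : nat) (f : X -> X) : Prop :=
  [/\ injective f, (forall x i, (L <= i)%N -> f x i = x i) &
      (forall x y, (forall i, (i < L)%N -> x i = y i) ->
         forall i, (i < L)%N -> f x i = f y i)].

Lemma pre_nth n x i : (i < n)%N -> nth false (pre n x) i = x i.
Proof.
move=> Hi; have -> : i = nat_of_ord (Ordinal Hi) by [].
by rewrite /pre nth_mktuple.
Qed.

Lemma pre_ext n x y : (forall i, (i < n)%N -> x i = y i) -> pre n x = pre n y.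
Proof. move=> H; apply: eq_from_tnth => j; rewrite !tnth_mktuple; apply: H; exact: ltn_ord. Qed.

Lemma pre_eq n x y : pre n x = pre n y -> forall i, (i < n)%N -> x i = y i.
Proof. by move=> H i Hi; rewrite -(pre_nth x Hi) -(pre_nth y Hi) H. Qed.

Lemma tuple_nth_eq n (t1 t2 : n.-tuple bool) :
  (forall i, (i < n)%N -> nth false t1 i = nth false t2 i) -> t1 = t2.
Proof.
move=> H; apply: eq_from_tnth => j; rewrite !(tnth_nth false); exact: H.
Qed.

Lemma act_lt n (s : {perm n.-tuple bool}) x i : (i < n)%N -> act s x i = nth false (s (pre n x)) i.
Proof. move=> H. rewrite /Defs.act. rewrite H. done. Qed.
Lemma act_ge n (s : {perm n.-tuple bool}) x i : (n <= i)%N -> act s x i = x i.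
Proof. move=> H. rewrite /Defs.act. rewrite ltnNge H. done. Qed.

Lemma pre_act n (s : {perm n.-tuple bool}) x : pre n (act s x) = s (pre n x).
Proof.
apply: tuple_nth_eq => i Hi; rewrite pre_nth // act_lt //.
Qed.

Lemma act_fix n (s : {perm n.-tuple bool}) x : s (pre n x) = pre n x -> act s x = x.
Proof.
move=> H; apply: functional_extensionality => i.
case: (ltnP i n) => Hi; last by rewrite act_ge.
by rewrite act_lt // H pre_nth.
Qed.

Lemma act_mul n (p q : {perm n.-tuple bool}) : act (p * q) = act q \o act p.
Proof.
apply: functional_extensionality => x; apply: functional_extensionality => i.
case: (ltnP i n) => Hi /=; last by rewrite !act_ge.
by rewrite !act_lt // pre_act permM.
Qed.

Lemma act_one n x : act (1 : {perm n.-tuple bool}) x = x.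
Proof. by apply: act_fix; rewrite perm1. Qed.

Lemma act_loc n (s : {perm n.-tuple bool}) : loc n (act s).
Proof.
split.
- move=> x y Hxy; apply: functional_extensionality => i.
  have Hp : pre n x = pre n y.
    by apply: (@perm_inj _ s); rewrite -!pre_act Hxy.
  case: (ltnP i n) => Hi; first exact: pre_eq Hp _ Hi.
  by have := congr1 (fun f => f i) Hxy; rewrite !act_ge.
- by move=> x i Hi; rewrite act_ge.
- by move=> x y H i Hi; rewrite !act_lt // (pre_ext H).
Qed.

Definition ext n (y : n.-tuple bool) : X := fun i => nth false y i.

Lemma loc_inS L f : loc L f -> inS f.
Proof.
case=> finj ftl floc.
pose F (y : L.-tuple bool) : L.-tuple bool := [tuple f (ext y) i | i < L].
have FE y i : (i < L)%N -> nth false (F y) i = f (ext y) i.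
  by move=> Hi; have -> : i = nat_of_ord (Ordinal Hi) by []; rewrite nth_mktuple.
have injF : injective F.
  move=> y1 y2 Hy.
  have He : f (ext y1) = f (ext y2).
    apply: functional_extensionality => i.
    case: (ltnP i L) => Hi; first by rewrite -!FE // Hy.
    rewrite !ftl // /ext !nth_default // size_tuple //.
  have := finj _ _ He => He2.
  apply: tuple_nth_eq => i Hi.
  exact: (congr1 (fun g => g i) He2).
exists L, (perm injF).
apply: functional_extensionality => x; apply: functional_extensionality => i.
case: (ltnP i L) => Hi; last by rewrite act_ge // ftl.
rewrite act_lt // permE FE //; apply: floc => // j Hj; rewrite /ext pre_nth //.
Qed.

Lemma inS_loc f : inS f -> exists L, loc L f.
Proof. by case=> n [s ->]; exists n; exact: act_loc. Qed.

Lemma loc_mono L L' f : (L <= L')%N -> loc L f -> loc L' f.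
Proof.
move=> HL [fi ft fl]; split => //.
- by move=> x i Hi; apply: ft; exact: leq_trans Hi.
- move=> x y H i Hi; case: (ltnP i L) => HiL.
    by apply: fl => // j Hj; apply: H; exact: leq_trans Hj HL.
  by rewrite !ft // H.
Qed.

Lemma loc_comp L f g : loc L f -> loc L g -> loc L (f \o g).
Proof.
move=> [fi ft fl] [gi gt gl]; split.
- exact: inj_comp.
- by move=> x i Hi /=; rewrite ft // gt.
- by move=> x y H i Hi /=; apply: fl => // j Hj; exact: gl.
Qed.

Lemma inS_comp f g : inS f -> inS g -> inS (f \o g).
Proof.
move=> /inS_loc [L1 H1] /inS_loc [L2 H2]; apply: (@loc_inS (maxn L1 L2)).
apply: loc_comp; apply: loc_mono; try eassumption.
  exact: leq_maxl. exact: leq_maxr.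
Qed.

Lemma inS_id : inS id.
Proof.
apply: (@loc_inS 0 id); split.
- by move=> x y.
- by move=> x i _.
- by move=> x y _ i.
Qed.

Lemma inS_inv f : inS f -> exists f', [/\ inS f', f' \o f = id & f \o f' = id].
Proof.
case=> n [s ->]; exists (act s^-1%g); split.
- by exists n, s^-1%g.
- by rewrite -act_mul mulgV; apply: functional_extensionality => x; rewrite act_one.
- by rewrite -act_mul mulVg; apply: functional_extensionality => x; rewrite act_one.
Qed.

Section SA.
Variables (k : nat) (C : {set k.-tuple bool}).
Definition inA x := pre k x \in C.

Lemma pre_flip j x : (k <= j)%N -> pre k (flip j x) = pre k x.
Proof.
move=> Hj; apply: pre_ext => i Hi; rewrite /flip.
case: eqP => // Eij; move: Hi; rewrite Eij ltnNge Hj //.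
Qed.

Lemma flipK j x : flip j (flip j x) = x.
Proof.
apply: functional_extensionality => i; rewrite /flip; case: eqP => //.
by rewrite negbK.
Qed.

Lemma flip_comm i j x : flip i (flip j x) = flip j (flip i x).
Proof.
apply: functional_extensionality => l; rewrite /flip.
by case: eqP; case: eqP.
Qed.

Lemma sA_A m x : inA x -> sA C m x = x.
Proof. by rewrite /sA /inA => ->. Qed.

Lemma sA_nA m x : ~~ inA x -> sA C m x = flip m.-1 x.
Proof. by rewrite /sA /inA => /negbTE ->. Qed.

Lemma inA_sA m x : (k < m)%N -> inA (sA C m x) = inA x.
Proof.
move=> Hm; rewrite /sA; case: ifP => // _; rewrite /inA pre_flip //.
by rewrite -ltnS (ltn_predK Hm).
Qed.

Lemma sAK m x : (k < m)%N -> sA C m (sA C m x) = x.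
Proof.
move=> Hm; case Hx: (inA x); first by rewrite !sA_A.
rewrite (sA_nA _ (negbT Hx)) sA_nA ?flipK //.
have := inA_sA x Hm; rewrite (sA_nA _ (negbT Hx)) => ->; rewrite Hx //.
Qed.

Lemma sA_loc m : (k < m)%N -> loc m (sA C m).
Proof.
move=> Hm; have m0 : (0 < m)%N by exact: leq_ltn_trans Hm.
split.
- exact: can_inj (fun x => sAK x Hm).
- move=> x i Hi; case Hx: (inA x); first by rewrite sA_A.
  rewrite sA_nA ?Hx // /flip; case: eqP => // E.
  by move: Hi; rewrite E -ltnS (ltn_predK m0) ltnn.
- move=> x y H i Hi.
  have Hp : pre k x = pre k y by apply: pre_ext => j Hj; apply: H; exact: ltn_trans Hj Hm.
  rewrite /sA Hp; case: ifP => _; first exact: H.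
  by rewrite /flip H.
Qed.

Lemma sA_comm a b x : (k < a)%N -> (k < b)%N -> sA C a (sA C b x) = sA C b (sA C a x).
Proof.
move=> Ha Hb; case Hx: (inA x); first by rewrite !sA_A.
have Hx' := negbT Hx.
have Ha' : ~~ inA (flip a.-1 x) by rewrite -(sA_nA _ Hx') inA_sA.
have Hb' : ~~ inA (flip b.-1 x) by rewrite -(sA_nA _ Hx') inA_sA.
rewrite (sA_nA a Hx') (sA_nA b Hx') (sA_nA _ Ha') (sA_nA _ Hb') flip_comm //.
Qed.

Section T.
Variables (n : nat) (t : X -> X).
Hypothesis Ht : loc n t.
Hypothesis tK : forall x, t (t x) = x.
Hypothesis tA : forall x, inA x -> t x = x.

Lemma t_inA x : inA (t x) = inA x.
Proof.
case Hx: (inA x); first by rewrite tA.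
apply: negbTE; apply/negP => H; move: Hx; rewrite -(tK x) tA // H //.
Qed.

Lemma t_flip j x : (n <= j)%N -> t (flip j x) = flip j (t x).
Proof.
case: Ht => _ tt tl Hj; apply: functional_extensionality => i.
rewrite /flip; case: eqP => [->|Eij].
- by rewrite tt // /flip eqxx tt.
- case: (ltnP i n) => Hi.
    apply: tl => // l Hl; rewrite /flip; case: eqP => // E.
    by move: Hl; rewrite E ltnNge Hj.
  by rewrite !tt // /flip; case: eqP.
Qed.

Lemma t_sA a x : (n < a)%N -> (k < a)%N -> t (sA C a x) = sA C a (t x).
Proof.
move=> Hn Hk; case Hx: (inA x); first by rewrite sA_A // tA // sA_A.
have Hx' := negbT Hx.
rewrite !sA_nA ?t_inA // t_flip //.
by rewrite -ltnS (ltn_predK Hn).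
Qed.

Definition u b x := if x b.-1 then t x else x.

Lemma t_tail x i : (n <= i)%N -> t x i = x i.
Proof. by case: Ht => _ tt _; exact: tt. Qed.

Lemma pred_ge b : (n < b)%N -> (n <= b.-1)%N.
Proof. by move=> H; rewrite -ltnS (ltn_predK H). Qed.

Lemma uK b x : (n < b)%N -> u b (u b x) = x.
Proof.
move=> Hb; rewrite /u; case Ex: (x b.-1); last by rewrite Ex.
by rewrite t_tail ?pred_ge // Ex tK.
Qed.

Lemma u_loc b : (n < b)%N -> loc b (u b).
Proof.
move=> Hb; have b0 : (0 < b)%N by exact: leq_ltn_trans Hb.
split.
- exact: can_inj (fun x => uK x Hb).
- move=> x i Hi; rewrite /u; case: ifP => // _; apply: t_tail.
  exact: ltnW (leq_trans Hb Hi).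
- move=> x y H i Hi; rewrite /u.
  have Hbx : x b.-1 = y b.-1 by apply: H; rewrite ltn_predL.
  rewrite Hbx; case: ifP => _; last exact: H.
  case: (ltnP i n) => Hin.
    case: Ht => _ _ tl; apply: tl => // l Hl; apply: H; exact: ltn_trans Hl Hb.
  by rewrite !t_tail // H.
Qed.

Lemma u_sA a b x : (n < a)%N -> (k < a)%N -> (n < b)%N -> a != b ->
  u b (sA C a x) = sA C a (u b x).
Proof.
move=> Hna Hka Hnb Hab.
have a0 : (0 < a)%N by exact: leq_ltn_trans Hna.
have b0 : (0 < b)%N by exact: leq_ltn_trans Hnb.
case Hx: (inA x).
  rewrite sA_A // /u; case: ifP => _; rewrite ?tA // sA_A //.
have Hx' := negbT Hx.
have Hfl : flip a.-1 x b.-1 = x b.-1.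
  rewrite /flip; case: eqP => // E; move/eqP: Hab; case.
  by rewrite -(prednK a0) -(prednK b0) E.
rewrite sA_nA // /u Hfl; case: ifP => _.
  rewrite sA_nA ?t_inA // t_flip //; exact: pred_ge.
by rewrite sA_nA.
Qed.

Lemma u_conj b x : (n < b)%N -> (k < b)%N -> u b (sA C b (u b x)) = t (sA C b x).
Proof.
move=> Hnb Hkb.
case Hx: (inA x).
  have ux : u b x = x by rewrite /u; case: ifP => // _; exact: tA.
  by rewrite ux !(sA_A _ Hx) ux tA.
have Hx' := negbT Hx.
have Hp := pred_ge Hnb.
have E1 : sA C b x = flip b.-1 x := sA_nA _ Hx'.
have E2 : sA C b (t x) = flip b.-1 (t x) by rewrite sA_nA // t_inA.
rewrite /u; case Ex: (x b.-1).
- rewrite E2 E1 t_flip //.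
  have -> : flip b.-1 (t x) b.-1 = false by rewrite /flip eqxx t_tail // Ex.
  by rewrite t_flip.
- have E3 : (sA C b x) b.-1 = true by rewrite E1 /flip eqxx Ex.
  by rewrite /= E3.
Qed.
End T.
End SA.

Local Open Scope ring_scope.

Section Hil.
Variables (R : realType) (V : lmodType R[i]) (ip : V -> V -> R[i]).
Hypothesis Hip : is_inner_product ip.

Lemma ipDZ a x y z : ip (a *: x + y) z = a * ip x z + ip y z.
Proof. by case: Hip => H _ _ _; apply: H. Qed.
Lemma ipC x y : ip y x = (ip x y)^*.
Proof. by case: Hip => _ H _ _; apply: H. Qed.
Lemma ip_ge0 x : 0 <= ip x x.
Proof. by case: Hip => _ _ H _; apply: H. Qed.
Lemma ip_eq0 x : ip x x = 0 -> x = 0.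
Proof. by case: Hip => _ _ _ H; apply: H. Qed.

Lemma ip0l z : ip 0 z = 0.
Proof.
have := ipDZ 1 0 0 z; rewrite scale1r addr0 mul1r => H.
by apply: (addIr (ip 0 z)); rewrite add0r -H.
Qed.
Lemma ip0r z : ip z 0 = 0.
Proof. by rewrite ipC ip0l rmorph0. Qed.
Lemma ipD1 x y z : ip (x + y) z = ip x z + ip y z.
Proof. by rewrite -{1}(scale1r x) ipDZ mul1r. Qed.
Lemma ipZ1 a x z : ip (a *: x) z = a * ip x z.
Proof. by rewrite -(addr0 (a *: x)) ipDZ ip0l addr0. Qed.
Lemma ipN1 x z : ip (- x) z = - ip x z.
Proof. by rewrite -scaleN1r ipZ1 mulN1r. Qed.
Lemma ipB1 x y z : ip (x - y) z = ip x z - ip y z.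
Proof. by rewrite ipD1 ipN1. Qed.
Lemma ipD2 z x y : ip z (x + y) = ip z x + ip z y.
Proof. by rewrite ipC ipD1 rmorphD /= -!ipC. Qed.
Lemma ipB2 z x y : ip z (x - y) = ip z x - ip z y.
Proof. by rewrite ipC ipB1 rmorphB /= -!ipC. Qed.
Lemma ipZ2 z a x : ip z (a *: x) = a^* * ip z x.
Proof. by rewrite ipC ipZ1 rmorphM /= -ipC. Qed.

Lemma ip_real x : ip x x \is Num.real.
Proof. exact: ger0_real (ip_ge0 x). Qed.

Definition hn x := hnorm ip x.
Lemma hn_ge0 x : 0 <= hn x.
Proof. by rewrite /hn /hnorm sqrtC_ge0 ip_ge0. Qed.
Lemma hn_sq x : hn x ^+ 2 = ip x x.
Proof. by rewrite /hn /hnorm sqrtCK. Qed.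

Lemma CS x y : `|ip x y| <= hn x * hn y.
Proof.
have [->|y0] := eqVneq y 0.
  by rewrite ip0r normr0 mulr_ge0 ?hn_ge0.
set p := ip x y; set X0 := ip x x; set Y := ip y y.
have Yge : 0 <= Y := ip_ge0 y.
have Yn0 : Y != 0 by apply/eqP => /ip_eq0 /eqP; rewrite (negbTE y0).
have Ygt : 0 < Y by rewrite lt_def Yn0 Yge.
have YJ : Y^* = Y by apply: conj_Creal; exact: ger0_real.
set l := p / Y.
have lJ : l^* = p^* / Y by rewrite /l rmorphM /= fmorphV /= YJ.
have H := ip_ge0 (x - l *: y).
have E : ip (x - l *: y) (x - l *: y) = X0 - p * p^* / Y.
  rewrite ipB1 !ipB2 !ipZ1 !ipZ2 lJ -/X0 -/p -/Y.
  rewrite (ipC x y) -/p /l.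
  field; exact: Yn0.
move: H; rewrite E subr_ge0 ler_pdivrMr // => H.
have H2 : `|p| ^+ 2 <= (hn x * hn y) ^+ 2.
  by rewrite normCK exprMn !hn_sq.
rewrite -(ler_pXn2r (n := 2)) // ?nnegrE ?mulr_ge0 ?hn_ge0 ?normr_ge0 //.
Qed.

End Hil.

Section Lim.
Variable R : realType.
Implicit Types (u w : nat -> R[i]) (l : R[i]).

Lemma cvgC_tail u w l : cvgC u l -> (exists N, forall m, (N <= m)%N -> u m = w m) -> cvgC w l.
Proof.
move=> Hu [N HN] e e0; have [N1 H1] := Hu e e0; exists (maxn N N1) => m Hm.
rewrite -HN; first by apply: H1; exact: leq_trans (leq_maxr _ _) Hm.
exact: leq_trans (leq_maxl _ _) Hm.
Qed.

Lemma cvgC_uniq u l1 l2 : cvgC u l1 -> cvgC u l2 -> l1 = l2.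
Proof.
move=> H1 H2; apply/eqP; rewrite -subr_eq0; apply/negP => /negP Hz.
set e := `|l1 - l2| / 2.
have e0 : 0 < e by rewrite divr_gt0 ?normr_gt0 ?ltr0n.
have [N1 K1] := H1 e e0; have [N2 K2] := H2 e e0.
set m := maxn N1 N2.
have A1 := K1 m (leq_maxl _ _); have A2 := K2 m (leq_maxr _ _).
have : `|l1 - l2| < e + e.
  apply: le_lt_trans (ler_distD (u m) l1 l2) _.
  by rewrite distrC; apply: ltrD.
by rewrite -splitr ltxx.
Qed.

Lemma cvgC_add u w l1 l2 : cvgC u l1 -> cvgC w l2 -> cvgC (fun m => u m + w m) (l1 + l2).
Proof.
move=> H1 H2 e e0.
have e2 : 0 < e / 2 by rewrite divr_gt0 ?ltr0n.
have [N1 K1] := H1 _ e2; have [N2 K2] := H2 _ e2.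
exists (maxn N1 N2) => m Hm.
have A1 := K1 m (leq_trans (leq_maxl _ _) Hm).
have A2 := K2 m (leq_trans (leq_maxr _ _) Hm).
have -> : u m + w m - (l1 + l2) = (u m - l1) + (w m - l2) by rewrite opprD addrACA.
rewrite (splitr e); apply: le_lt_trans (ler_normD _ _) _.
by apply: ltrD.
Qed.

Lemma cvgC_bound u l M : M \is Num.real -> cvgC u l ->
  (exists N, forall m, (N <= m)%N -> `|u m| <= M) -> `|l| <= M.
Proof.
move=> MR Hu [N HN]; rewrite real_leNgt ?normr_real //; apply/negP => HM.
set e := `|l| - M.
have e0 : 0 < e by rewrite subr_gt0.
have [N1 K1] := Hu e e0.
set m := maxn N N1.
have A1 := K1 m (leq_maxr _ _); have A2 := HN m (leq_maxl _ _).
have : `|l| < M + e.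
  have -> : l = u m - (u m - l) by rewrite opprB addrC subrK.
  apply: le_lt_trans (ler_normB _ _) _.
  exact: ler_ltD A2 A1.
by rewrite /e addrCA subrr addr0 ltxx.
Qed.

Lemma le_eps (x M : R[i]) : x \is Num.real -> M \is Num.real ->
  (forall e, 0 < e -> x <= M + e) -> x <= M.
Proof.
move=> xR MR H; rewrite real_leNgt //; apply/negP => HM.
set e := (x - M) / 2.
have e0 : 0 < e by rewrite divr_gt0 ?subr_gt0 ?ltr0n.
have := H e e0.
have -> : M + e = x - e.
  have ee : e + e = x - M by rewrite /e -splitr.
  by apply/eqP; rewrite eq_sym subr_eq -addrA ee addrC subrK.
by rewrite -subr_ge0 addrAC subrr add0r oppr_ge0 (lt_geF e0).
Qed.
End Lim.

Section Main.
Variables (R : realType) (V : lmodType R[i]) (ip : V -> V -> R[i])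
  (chi : (X -> X) -> R[i]) (pi : (X -> X) -> V -> V) (xi : V)
  (k : nat) (C : {set k.-tuple bool}) (P : V -> V).
Hypothesis Hip : is_inner_product ip.
Hypothesis Hchi : is_character chi.
Hypothesis HG : GNS_triple ip chi pi xi.
Hypothesis HP : wot_limit ip (fun m => pi (sA C m)) P.

Lemma Hrep : unitary_rep ip pi.
Proof. by case: HG. Qed.

Lemma pi_lin g a x y : inS g -> pi g (a *: x + y) = a *: pi g x + pi g y.
Proof. by case: Hrep => H _ _ _ _ Hg; apply: H. Qed.
Lemma pi_iso g x y : inS g -> ip (pi g x) (pi g y) = ip x y.
Proof. by case: Hrep => _ H _ _ _ Hg; apply: H. Qed.
Lemma pi_comp g h x : inS g -> inS h -> pi (g \o h) x = pi g (pi h x).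
Proof. by case: Hrep => _ _ _ H _ Hg Hh; apply: H. Qed.
Lemma pi_id x : pi id x = x.
Proof. by case: Hrep => _ _ _ _ H; apply: H. Qed.
Lemma chi_c f g : inS f -> inS g -> chi (f \o g) = chi (g \o f).
Proof. by case: Hchi => H _ _; apply: H. Qed.
Lemma chi_gns g : inS g -> chi g = ip (pi g xi) xi.
Proof. by case: HG => _ _ _ H; apply: H. Qed.

Lemma pi_invol t x : inS t -> (forall y, t (t y) = y) -> pi t (pi t x) = x.
Proof.
move=> Ht tK; rewrite -pi_comp //.
have -> : t \o t = id by apply: functional_extensionality => y; exact: tK.
exact: pi_id.
Qed.

Lemma ip_swap t x y : inS t -> (forall z, t (t z) = z) -> ip (pi t x) y = ip x (pi t y).
Proof.
move=> Ht tK; rewrite -{1}(pi_invol y Ht tK) pi_iso //.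
Qed.

Lemma GNSip h1 h2 h2' : inS h1 -> inS h2 -> inS h2' -> h2' \o h2 = id ->
  ip (pi h1 xi) (pi h2 xi) = chi (h2' \o h1).
Proof.
move=> H1 H2 H2' E.
rewrite -(pi_iso _ _ H2') -!pi_comp // E pi_id chi_gns //; exact: inS_comp.
Qed.

Lemma sA_inS m : (k < m)%N -> inS (sA C m).
Proof. by move=> H; apply: (@loc_inS m); exact: sA_loc. Qed.


Lemma ip_ext u w : (forall z, ip u z = ip w z) -> u = w.
Proof.
move=> H; apply/eqP; rewrite -subr_eq0; apply/eqP; apply: (ip_eq0 Hip).
by rewrite (ipB1 Hip) H subrr.
Qed.

Lemma Plin a x y : P (a *: x + y) = a *: P x + P y.
Proof.
apply: ip_ext => z.
have L1 := cvgC_add (HP x (a^* *: z)) (HP y z).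
have L2 := HP (a *: x + y) z.
have L3 : cvgC (fun m => ip (pi (sA C m) (a *: x + y)) z)
              (ip (P x) (a^* *: z) + ip (P y) z).
  apply: (cvgC_tail L1); exists k.+1 => m Hm /=.
  by rewrite (pi_lin _ _ _ (sA_inS Hm)) (ipD1 Hip) (ipZ1 Hip) (ipZ2 Hip) conjCK.
rewrite (cvgC_uniq L2 L3) (ipZ2 Hip) conjCK.
by rewrite (ipDZ Hip).
Qed.

Lemma P_bound d z : `|ip (P d) z| <= hn ip d * hn ip z.
Proof.
apply: (cvgC_bound _ (HP d z)).
  by apply: ger0_real; apply: mulr_ge0; apply: hn_ge0.
exists k.+1 => m Hm /=; apply: le_trans (CS Hip _ _) _.
by rewrite /hn /hnorm (pi_iso _ _ (sA_inS Hm)).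
Qed.

Section T.
Variables (n : nat) (t : X -> X).
Hypotheses (Ht : loc n t) (tK : forall x, t (t x) = x) (tA : forall x, inA C x -> t x = x).

Let tS : inS t := loc_inS Ht.
Let N := maxn n k.

Lemma chi_key a b : (N < a)%N -> (N < b)%N -> a != b ->
  chi (sA C a \o t \o sA C b) = chi (sA C a \o sA C b).
Proof.
move=> Ha Hb Hab.
have Hna : (n < a)%N := leq_ltn_trans (leq_maxl _ _) Ha.
have Hka : (k < a)%N := leq_ltn_trans (leq_maxr _ _) Ha.
have Hnb : (n < b)%N := leq_ltn_trans (leq_maxl _ _) Hb.
have Hkb : (k < b)%N := leq_ltn_trans (leq_maxr _ _) Hb.
have uS : inS (u t b) := loc_inS (u_loc Ht tK Hnb).
have aS := sA_inS Hka; have bS := sA_inS Hkb.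
have -> : sA C a \o t \o sA C b = u t b \o ((sA C a \o sA C b) \o u t b).
  apply: functional_extensionality => x /=.
  by rewrite (u_sA Ht tK tA _ Hna Hka Hnb Hab) (u_conj Ht tK tA).
have cS : inS ((sA C a \o sA C b) \o u t b).
  by apply: inS_comp => //; apply: inS_comp.
rewrite (chi_c uS cS).
congr chi; apply: functional_extensionality => x /=.
by rewrite (uK Ht tK _ Hnb).
Qed.

Lemma chi_conj g g' h F : inS g -> inS g' -> inS h -> g \o g' = id ->
  (forall x, F x = g' (h (g x))) -> chi F = chi h.
Proof.
move=> gS g'S hS gg' HF.
have -> : F = g' \o (h \o g) by apply: functional_extensionality => x; exact: HF.
rewrite chi_c //; last exact: inS_comp.
congr chi; apply: functional_extensionality => x /=.
by have := congr1 (fun f => f x) gg' => /= ->.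
Qed.

Lemma keyT g : inS g -> pi t (P (pi g xi)) = P (pi g xi).
Proof.
move=> gS; have [g' [g'S g'g gg']] := inS_inv gS.
set v := pi g xi.
have E0 : forall a b, (N < a)%N -> (N < b)%N -> a != b ->
    ip (pi (sA C b) v) (pi t (pi (sA C a) v)) = ip (pi (sA C b) v) (pi (sA C a) v).
  move=> a b Ha Hb Hab.
  have Hka : (k < a)%N := leq_ltn_trans (leq_maxr _ _) Ha.
  have Hkb : (k < b)%N := leq_ltn_trans (leq_maxr _ _) Hb.
  have aS := sA_inS Hka; have bS := sA_inS Hkb.
  rewrite /v -(pi_comp _ bS gS) -(pi_comp _ aS gS) -(pi_comp _ tS (inS_comp aS gS)).
  rewrite (@GNSip _ _ (g' \o sA C a \o t)); first last.
  - apply: functional_extensionality => x /=.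
    rewrite tK sAK //. by have := congr1 (fun f => f x) g'g.
  - by apply: inS_comp => //; apply: inS_comp.
  - by apply: inS_comp => //; apply: inS_comp.
  - exact: inS_comp.
  rewrite (@GNSip _ _ (g' \o sA C a)); first last.
  - apply: functional_extensionality => x /=.
    rewrite sAK //. by have := congr1 (fun f => f x) g'g.
  - exact: inS_comp.
  - exact: inS_comp.
  - exact: inS_comp.
  have h1S : inS (sA C a \o t \o sA C b) by apply: inS_comp => //; apply: inS_comp.
  have h2S : inS (sA C a \o sA C b) by apply: inS_comp.
  transitivity (chi (sA C a \o t \o sA C b)).
    by apply: (chi_conj gS g'S h1S gg') => y.
  transitivity (chi (sA C a \o sA C b)); first exact: chi_key.
  by symmetry; apply: (chi_conj gS g'S h2S gg') => y.
set x := P v.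
have E1 : forall a, (N < a)%N -> ip x (pi t (pi (sA C a) v)) = ip x (pi (sA C a) v).
  move=> a Ha.
  apply: (cvgC_uniq (HP v (pi t (pi (sA C a) v)))).
  apply: (cvgC_tail (HP v (pi (sA C a) v))).
  exists a.+1 => b Hb /=; symmetry; apply: E0 => //.
    exact: ltn_trans Ha Hb.
  by rewrite neq_ltn Hb.
have E2 : forall a, (N < a)%N -> ip (pi (sA C a) v) (pi t x) = ip (pi (sA C a) v) x.
  move=> a Ha.
  by rewrite (ipC Hip (pi t x)) (ip_swap _ _ tS tK) E1 // -ipC.
have E3 : ip x (pi t x) = ip x x.
  apply: (cvgC_uniq (HP v (pi t x))).
  apply: (cvgC_tail (HP v x)).
  by exists N.+1 => a Ha /=; symmetry; apply: E2.
have E4 : ip (pi t x) x = ip x x by rewrite (ip_swap _ _ tS tK) E3.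
have E5 : ip (pi t x) (pi t x) = ip x x by rewrite pi_iso.
apply/eqP; rewrite -subr_eq0; apply/eqP; apply: (ip_eq0 Hip).
rewrite (ipB1 Hip) !(ipB2 Hip) E5 E4 E3.
by rewrite subrr.
Qed.

Definition D x := pi t (P x) - P x.

Lemma Dlin a x y : D (a *: x + y) = a *: D x + D y.
Proof.
rewrite /D Plin (pi_lin _ _ _ tS) scalerBr.
by rewrite opprD addrACA.
Qed.

Lemma D0 : D 0 = 0.
Proof.
have := Dlin 1 0 0; rewrite !scale1r addr0 => H.
by apply: (addIr (D 0)); rewrite add0r -H.
Qed.

Lemma Dspan K (g : 'I_K -> X -> X) c : (forall i, inS (g i)) ->
  D (\sum_(i < K) c i *: pi (g i) xi) = 0.
Proof.
move=> gS; apply: (big_ind (fun v => D v = 0)).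
- exact: D0.
- by move=> x y Hx Hy; rewrite -(scale1r x) Dlin Hx Hy scaler0 addr0.
- move=> i _; rewrite -(addr0 (c i *: _)) Dlin D0 addr0.
  by rewrite /D keyT // subrr scaler0.
Qed.

Lemma keyAll eta : pi t (P eta) = P eta.
Proof.
apply/eqP; rewrite -subr_eq0 -/(D eta); apply/eqP.
set w := D eta.
set hw := hn ip w.
have hw0 : 0 <= hw := hn_ge0 Hip w.
have claim : forall e, 0 < e -> hw ^+ 2 <= (e * hw) *+ 2.
  move=> e e0.
  case: HG => _ _ Hcyc _.
  have [K [g [c [gS Hd]]]] := Hcyc eta e e0.
  set S := \sum_(i < K) c i *: pi (g i) xi in Hd.
  set d := eta - S in Hd.
  have wD : w = D d.
    by rewrite /w -{1}(subrK S eta) -/d -{1}(scale1r d) Dlin Dspan // addr0 scale1r.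
  have Eq : ip w w = ip (P d) (pi t w) - ip (P d) w.
    by rewrite {1}wD /D (ipB1 Hip) (ip_swap _ _ tS tK).
  have Hpt : hn ip (pi t w) = hw by rewrite /hn /hnorm pi_iso.
  rewrite hn_sq // -(ger0_norm (ip_ge0 Hip w)) Eq.
  apply: le_trans (ler_normB _ _) _.
  rewrite mulr2n; apply: lerD; apply: le_trans (P_bound _ _) _;
    rewrite ?Hpt; apply: ler_wpM2r => //; exact: ltW.
have : hw = 0.
  apply/eqP; rewrite eq_le hw0 andbT.
  apply: (le_eps (ger0_real hw0) (real0 _)) => e e0.
  rewrite add0r.
  have [->|hwn] := eqVneq hw 0; first exact: ltW.
  have hwp : 0 < hw by rewrite lt_def hwn hw0.
  have e2 : 0 < e / 2 by rewrite divr_gt0 ?ltr0n.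
  have := claim _ e2.
  rewrite expr2 -mulrnAl ler_pM2r // => H.
  apply: le_trans H _.
  by rewrite -mulr_natr mulfVK ?pnatr_eq0.
move=> h0; apply: (ip_eq0 Hip); rewrite -(hn_sq ip w) -/hw h0 expr2 mulr0 //.
Qed.
End T.

Lemma perm1_case n (s : {perm n.-tuple bool}) eta : (forall y, s y = y) ->
  pi (act s) (P eta) = P eta.
Proof.
move=> H; have -> : s = 1%g by apply/permP => y; rewrite perm1 H.
have -> : act (1%g : {perm n.-tuple bool}) = id.
  by apply: functional_extensionality => x; exact: act_one.
exact: pi_id.
Qed.

Lemma fixA_perm n (s : {perm n.-tuple bool}) :
  (forall x, inA C x -> act s x = x) -> forall eta, pi (act s) (P eta) = P eta.
Proof.
have main : forall m (s : {perm n.-tuple bool}), (#|[set y | s y != y]| <= m)%N ->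
    (forall x, inA C x -> act s x = x) -> forall eta, pi (act s) (P eta) = P eta.
  elim=> [|m IH] s1 Hm HA eta.
    apply: perm1_case => y; apply/eqP; apply/negP => /negP Hy.
    have Hin : y \in [set y | s1 y != y] by rewrite inE.
    by move: Hm; rewrite leqn0 => /eqP /cards0_eq E; rewrite E inE in Hin.
  case: (pickP [pred y | s1 y != y]) => [y /= Hy | none]; last first.
    apply: perm1_case => y; apply/eqP; apply/negP => /negP Hy.
    by have := none y; rewrite /= Hy.
  set tau := tperm y (s1 y).
  set rho := (s1 * tau)%g.
  have Es : s1 = (rho * tau)%g by rewrite /rho -mulgA tperm2 mulg1.
  have Hpre : forall x, inA C x -> s1 (pre n x) = pre n x.
    by move=> x Hx; rewrite -pre_act HA.
  have tauA : forall x, inA C x -> act tau x = x.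
    move=> x Hx; apply: act_fix; apply: tpermD.
    - apply/eqP => E; move/eqP: Hy; apply; rewrite E; exact: Hpre.
    - apply/eqP => E; move/eqP: Hy; apply.
      apply: (@perm_inj _ s1); rewrite E; exact: Hpre.
  have tauK : forall x, act tau (act tau x) = x.
    move=> x; have := congr1 (fun f => f x) (act_mul tau tau).
    by rewrite tperm2 act_one /= => <-.
  have rhoA : forall x, inA C x -> act rho x = x.
    by move=> x Hx; rewrite /rho act_mul /= HA // tauA.
  have Hlt : (#|[set z | rho z != z]| < #|[set z | s1 z != z]|)%N.
    apply: proper_card; apply/properP; split.
      apply/subsetP => z; rewrite !inE; apply: contra => /eqP Ez.
      rewrite /rho permM Ez tpermD //.
        by apply/eqP => E; move: Hy; rewrite E Ez eqxx.
      apply/eqP => E; move/eqP: Hy; apply.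
      by apply: (@perm_inj _ s1); rewrite E Ez.
    exists y; first by rewrite inE.
    by rewrite inE /rho permM tpermR eqxx.
  have IHr := IH rho _ rhoA.
  rewrite Es act_mul pi_comp; last 2 first.
  - exact: loc_inS (act_loc tau).
  - exact: loc_inS (act_loc rho).
  rewrite IHr; last by rewrite -ltnS; exact: leq_trans Hlt Hm.
  exact: (keyAll (act_loc tau) tauK tauA).
by move=> HA; apply: (main _ s (leqnn _) HA).
Qed.
End Main.

Unset Implicit Arguments.
Theorem mainTheorem6 (R : realType) (V : lmodType R[i]) (ip : V -> V -> R[i])
    (chi : (X -> X) -> R[i]) (pi : (X -> X) -> V -> V) (xi : V)
    (k : nat) (C : {set k.-tuple bool}) (s : X -> X) (P : V -> V) :
  is_hilbert ip ->
  is_character chi -> indecomposable chi ->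
  GNS_triple ip chi pi xi ->
  inS s -> (forall x : X, pre k x \in C -> s x = x) ->
  wot_limit ip (fun m => pi (sA C m)) P ->
  forall eta : V, pi s (P eta) = P eta.
Proof.
move=> [Hip _] Hchi _ HG [n [sg ->]] HA HP eta.
exact: (fixA_perm Hip Hchi HG HP HA).
Qed.
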